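(* For every hypothesis class $\mathcal{H}\subseteq\{0,1\}^{\mathcal{X}}$, $\mathtt{CD}(\mathcal{H})<\infty$ if and only if $\mathtt{LD}(\mathcal{H})<\infty$.
   Context: A dataset of size $m$ is $S=((x_1,y_1),\dots,(x_m,y_m))\in(\mathcal{X}\times\{0,1\})^m$; it is $\mathcal{H}$-realizable if some $h\in\mathcal{H}$ satisfies $h(x_i)=y_i$ for all $i$. $G_m(\mathcal{H})$ is the graph on realizable datasets of size $m$ with $S,S'$ adjacent iff there is $x$ with $(x,0)$ appearing in $S$ and $(x,1)$ appearing in $S'$; $\omega_m$ is its clique number; $\mathtt{CD}(\mathcal{H})=\sup\{m:\omega_m=2^m\}$. A mistake tree is a complete binary tree whose internal nodes are labeled by points of $\mathcal{X}$, each internal node having one outgoing edge labeled $0$ and one labeled $1$; a root-to-leaf path yields the sequence of (node label, edge label) pairs. $\mathcal{H}$ shatters the tree if every root-to-leaf path is realizable by $\mathcal{H}$. $\mathtt{LD}(\mathcal{H})$ is the largest depth of a complete mistake tree shattered by $\mathcal{H}$ ($\infty$ if unbounded). *)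

(* Defs.v *)
From Stdlib Require Import List Arith.
Import ListNotations.

Section Defs.
Variable X : Type.

Definition hclass := (X -> bool) -> Prop.

Definition dataset := list (X * bool).

Definition realizable (H : hclass) (S : dataset) : Prop :=
  exists h, H h /\ forall p, In p S -> h (fst p) = snd p.

(* Adjacency in G_m(H) (undirected: symmetric closure of the stated relation). *)
Definition adjacent (S S' : dataset) : Prop :=
  exists x, (In (x, false) S /\ In (x, true) S') \/
            (In (x, true) S /\ In (x, false) S').

Definition clique (H : hclass) (m : nat) (C : list dataset) : Prop :=
  NoDup C /\
  (forall S, In S C -> length S = m /\ realizable H S) /\
  (forall S S', In S C -> In S' C -> S <> S' -> adjacent S S').

(* omega_m(H) = k : the clique number of G_m(H) equals k (some clique of size k,
   and no clique — hence no infinite clique either — is larger). *)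
Definition clique_number_eq (H : hclass) (m k : nat) : Prop :=
  (exists C, clique H m C /\ length C = k) /\
  (forall C, clique H m C -> length C <= k).

Definition CD_finite (H : hclass) : Prop :=
  exists B, forall m, clique_number_eq H m (2 ^ m) -> m <= B.

Inductive mtree : Type :=
| Leaf : mtree
| Node : X -> mtree -> mtree -> mtree.  (* Node x t0 t1: edge 0 to t0, edge 1 to t1 *)

Fixpoint complete (d : nat) (t : mtree) : Prop :=
  match d, t with
  | 0, Leaf => True
  | S d', Node _ t0 t1 => complete d' t0 /\ complete d' t1
  | _, _ => False
  end.

Fixpoint paths (t : mtree) : list (list (X * bool)) :=
  match t with
  | Leaf => [[]]
  | Node x t0 t1 =>
      map (cons (x, false)) (paths t0) ++ map (cons (x, true)) (paths t1)
  end.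

Definition shatters (H : hclass) (t : mtree) : Prop :=
  forall p, In p (paths t) -> realizable H p.

Definition LD_finite (H : hclass) : Prop :=
  exists B, forall d t, complete d t -> shatters H t -> d <= B.

End Defs.

Arguments Leaf {X}.
Arguments Node {X}.

(* Main.v *)
Require Import Defs.
From Stdlib Require Import List Arith Lia Classical ClassicalEpsilon.
Import ListNotations.

Definition eqd {X : Type} (a b : X) : bool :=
  if excluded_middle_informative (a = b) then true else false.

Lemma eqd_spec {X : Type} (a b : X) : eqd a b = true <-> a = b.
Proof. unfold eqd; destruct (excluded_middle_informative (a = b)); split; congruence. Qed.

Definition real {X : Type} (h : X -> bool) (T : list (X * bool)) : Prop :=
  forall p, In p T -> h (fst p) = snd p.

Definition rm {X : Type} (x : X) (T : list (X * bool)) : list (X * bool) :=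
  filter (fun p => negb (eqd (fst p) x)) T.

Definition ent (X : Type) := (list (X * bool) * (X -> bool))%type.

Definition conf {X : Type} (a b : ent X) : Prop := adjacent X (fst a) (fst b).

Definition good {X : Type} (W : list (ent X)) : Prop :=
  ForallOrdPairs conf W /\ (forall e, In e W -> real (snd e) (fst e)).

Definition cls {X : Type} (W : list (ent X)) : (X -> bool) -> Prop :=
  fun h => exists T, In (T, h) W.

Definition ldle {X : Type} (K : (X -> bool) -> Prop) (d : nat) : Prop :=
  forall t, complete X (S d) t -> shatters X K t -> False.

Fixpoint Phi (n d : nat) : nat :=
  match n with
  | 0 => 1
  | S n' => match d with 0 => 1 | S d' => Phi n' (S d') + Phi n' d' end
  end.

Fixpoint tri (m : nat) : nat := match m with 0 => 0 | S m' => tri m' + S m' end.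

Lemma FOP_filter {A : Type} (R : A -> A -> Prop) (f : A -> bool) l :
  ForallOrdPairs R l -> ForallOrdPairs R (filter f l).
Proof.
  induction l as [|a l IH]; intros H; simpl; [constructor|].
  inversion H; subst. destruct (f a); auto.
  constructor; auto. apply Forall_forall. intros y Hy.
  apply filter_In in Hy. destruct Hy as [Hy _].
  rewrite Forall_forall in H2; auto.
Qed.

Lemma FOP_map {A B : Type} (R : A -> A -> Prop) (R' : B -> B -> Prop) (f : A -> B) l :
  ForallOrdPairs R l ->
  (forall a b, In a l -> In b l -> R a b -> R' (f a) (f b)) ->
  ForallOrdPairs R' (map f l).
Proof.
  induction l as [|a l IH]; intros H Hf; simpl; [constructor|].
  inversion H; subst. constructor.
  - apply Forall_forall. intros y Hy. apply in_map_iff in Hy.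
    destruct Hy as [z [<- Hz]]. apply Hf; simpl; auto.
    rewrite Forall_forall in H2; auto.
  - apply IH; auto. intros; apply Hf; simpl; auto.
Qed.

Lemma ldle_anti {X : Type} (K K' : (X -> bool) -> Prop) d :
  ldle K d -> (forall h, K' h -> K h) -> ldle K' d.
Proof.
  intros H Hs t Hc Hsh. apply (H t Hc). intros p Hp.
  destruct (Hsh p Hp) as [h [Hh Hr]]. exists h; auto.
Qed.

Lemma rm_In {X : Type} x (p : X * bool) T : In p (rm x T) <-> In p T /\ fst p <> x.
Proof.
  unfold rm. rewrite filter_In. split.
  - intros [H1 H2]. split; auto. intro E. apply eqd_spec in E. rewrite E in H2. discriminate.
  - intros [H1 H2]. split; auto. destruct (eqd (fst p) x) eqn:E; auto.
    exfalso; apply H2; apply eqd_spec; auto.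
Qed.

Lemma rm_len_le {X : Type} x (T : list (X*bool)) : length (rm x T) <= length T.
Proof. apply filter_length_le. Qed.

Lemma filter_len_lt {A : Type} (f : A -> bool) l p :
  In p l -> f p = false -> length (filter f l) < length l.
Proof.
  induction l as [|a l IH]; simpl; [tauto|].
  intros [<-|H] Hf.
  - rewrite Hf. pose proof (filter_length_le f l). lia.
  - destruct (f a); simpl; specialize (IH H Hf); lia.
Qed.

Lemma rm_len_lt {X : Type} x (p : X * bool) T : In p T -> fst p = x -> length (rm x T) < length T.
Proof.
  intros H E. apply (filter_len_lt _ _ p H). subst. 
  assert (eqd (fst p) (fst p) = true) by (apply eqd_spec; auto). rewrite H0; auto.
Qed.

Lemma conf_rm {X : Type} x (T T' : list (X*bool)) h h' :
  adjacent X T T' -> real h T -> real h' T' -> (h x = h' x) ->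
  adjacent X (rm x T) (rm x T').
Proof.
  intros [y Hy] Hr Hr' E. exists y.
  destruct (excluded_middle_informative (y = x)) as [->|Hne].
  - exfalso. destruct Hy as [[A B]|[A B]];
    apply Hr in A; apply Hr' in B; simpl in *; congruence.
  - destruct Hy as [[A B]|[A B]]; [left|right]; split; apply rm_In; auto.
Qed.

Definition fx {X : Type} (x : X) (e : ent X) : ent X := (rm x (fst e), snd e).

Lemma good_side {X : Type} (x : X) (q : ent X -> bool) (W : list (ent X)) :
  good W ->
  (forall a b, In a W -> In b W -> q a = true -> q b = true ->
     adjacent X (fst a) (fst b) -> snd a x = snd b x) ->
  good (map (fx x) (filter q W)).
Proof.
  intros [Hp Hr] Hq. split.
  - apply FOP_map with (R := conf). apply FOP_filter; auto.
    intros a b Ha Hb Hab. apply filter_In in Ha, Hb. unfold conf, fx; simpl.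
    apply conf_rm with (snd a) (snd b); [exact Hab | apply Hr; tauto | apply Hr; tauto |].
    apply Hq; first [exact Hab | tauto].
  - intros e He. apply in_map_iff in He. destruct He as [z [<- Hz]].
    apply filter_In in Hz. intros p Hp'. unfold fx in Hp'; simpl in Hp'.
    apply rm_In in Hp'. unfold fx; simpl. apply (Hr z); tauto.
Qed.

Lemma cls_side {X : Type} (x : X) q W h :
  cls (map (fx x) (filter q W)) h -> cls W h /\ exists e, In e W /\ q e = true /\ snd e = h.
Proof.
  intros [T HT]. apply in_map_iff in HT. destruct HT as [e [E He]].
  apply filter_In in He. unfold fx in E. inversion E; subst.
  split. exists (fst e). destruct e; simpl; tauto. exists e; tauto.
Qed.

Lemma Phi_n0 n : Phi n 0 = 1.
Proof. destruct n; reflexivity. Qed.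

Lemma inner {X : Type} (m : nat)
  (IH : forall d (W : list (ent X)), good W -> ldle (cls W) d ->
        (forall e, In e W -> length (fst e) <= m) -> length W <= Phi (tri m) d) :
  forall R d (W : list (ent X)), good W -> ldle (cls W) d ->
   (forall e, In e W -> length (fst e) <= S m /\
       (length (fst e) <= m \/ exists p, In p (fst e) /\ In (fst p) R)) ->
   length W <= Phi (tri m + length R) d.
Proof.
  induction R as [|x R IHR]; intros d W HW Hd Hinv.
  - rewrite Nat.add_0_r. apply IH; auto. intros e He.
    destruct (Hinv e He) as [_ [H|[p [_ Hp]]]]; auto. destruct Hp.
  - set (q0 := fun e : ent X => negb (snd e x)).
    set (q1 := fun e : ent X => snd e x).
    set (W0 := map (fx x) (filter q0 W)).
    set (W1 := map (fx x) (filter q1 W)).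
    assert (Hlen : length W = length W0 + length W1).
    { unfold W0, W1. rewrite !length_map.
      rewrite <- (filter_length q1 W). unfold q0, q1. lia. }
    assert (Hg : forall q c, (forall e, q e = true -> snd e x = c) ->
              good (map (fx x) (filter q W))).
    { intros q c Hq. apply good_side; auto. intros a b _ _ Ha Hb _.
      rewrite (Hq a Ha), (Hq b Hb). auto. }
    assert (G0 : good W0).
    { apply (Hg _ false). intros e He. unfold q0 in *. destruct (snd e x); simpl in *; congruence. }
    assert (G1 : good W1).
    { apply (Hg _ true). intros e He. unfold q1 in *. auto. }
    assert (Hinv' : forall q e, In e (map (fx x) (filter q W)) -> length (fst e) <= S m /\
       (length (fst e) <= m \/ exists p, In p (fst e) /\ In (fst p) R)).
    { intros q e He. apply in_map_iff in He. destruct He as [z [<- Hz]].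
      apply filter_In in Hz. destruct Hz as [Hz _].
      destruct (Hinv z Hz) as [L1 L2]. unfold fx; simpl.
      pose proof (rm_len_le x (fst z)). split; [lia|].
      destruct L2 as [L2|[p [Hp Hpx]]]; [left; lia|].
      destruct (excluded_middle_informative (fst p = x)) as [E|E].
      - left. pose proof (rm_len_lt x p (fst z) Hp E). lia.
      - destruct Hpx as [Hpx|Hpx]; [congruence|]. right. exists p.
        split; auto. apply rm_In; auto. }
    assert (Hcl : forall q, ldle (cls (map (fx x) (filter q W))) d).
    { intros q. apply ldle_anti with (cls W); auto. intros h Hh.
      apply (cls_side x q W h Hh). }
    simpl length. rewrite <- plus_n_Sm. rewrite Hlen.
    destruct d as [|d'].
    + rewrite Phi_n0.
      assert (HE : W0 = [] \/ W1 = []).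
      { destruct W0 as [|e0 W0'] eqn:E0; auto. destruct W1 as [|e1 W1'] eqn:E1; auto.
        exfalso. apply (Hd (Node x Leaf Leaf)). simpl; auto.
        assert (C0 : cls W0 (snd e0)) by (exists (fst e0); rewrite E0; destruct e0; simpl; auto).
        assert (C1 : cls W1 (snd e1)) by (exists (fst e1); rewrite E1; destruct e1; simpl; auto).
        apply cls_side in C0, C1. destruct C0 as [C0 [a [_ [Ha Ea]]]].
        destruct C1 as [C1 [b [_ [Hb Eb]]]].
        intros p Hp. simpl in Hp. destruct Hp as [<-|[<-|[]]].
        - exists (snd e0). split; auto. intros p [<-|[]]; simpl.
          subst. unfold q0 in Ha. simpl. rewrite <- Ea. destruct (snd a x); simpl in *; congruence.
        - exists (snd e1). split; auto. intros p [<-|[]]; simpl.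
          subst. unfold q1 in Hb. simpl. rewrite <- Eb. exact Hb. }
      assert (B0 : length W0 <= 1).
      { rewrite <- (Phi_n0 (tri m + length R)). apply IHR; [exact G0 | apply Hcl | apply Hinv']. }
      assert (B1 : length W1 <= 1).
      { rewrite <- (Phi_n0 (tri m + length R)). apply IHR; [exact G1 | apply Hcl | apply Hinv']. }
      destruct HE as [E|E]; rewrite E; simpl; lia.
    + simpl Phi.
      assert (B0 : length W0 <= Phi (tri m + length R) (S d')) by (apply IHR; [exact G0 | apply Hcl | apply Hinv']).
      assert (B1 : length W1 <= Phi (tri m + length R) (S d')) by (apply IHR; [exact G1 | apply Hcl | apply Hinv']).
      destruct (classic (ldle (cls W0) d')) as [D0|D0].
      { assert (length W0 <= Phi (tri m + length R) d') by (apply IHR; [exact G0 | exact D0 | apply Hinv']). lia. }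
      destruct (classic (ldle (cls W1) d')) as [D1|D1].
      { assert (length W1 <= Phi (tri m + length R) d') by (apply IHR; [exact G1 | exact D1 | apply Hinv']). lia. }
      exfalso.
      unfold ldle in D0, D1.
      apply not_all_ex_not in D0. destruct D0 as [t0 D0].
      apply not_all_ex_not in D1. destruct D1 as [t1 D1].
      apply imply_to_and in D0. destruct D0 as [Ct0 D0]. apply imply_to_and in D0. destruct D0 as [St0 _].
      apply imply_to_and in D1. destruct D1 as [Ct1 D1]. apply imply_to_and in D1. destruct D1 as [St1 _].
      apply (Hd (Node x t0 t1)). simpl; auto.
      intros p Hp. simpl in Hp. apply in_app_or in Hp.
      destruct Hp as [Hp|Hp]; apply in_map_iff in Hp; destruct Hp as [p' [<- Hp']].
      * destruct (St0 p' Hp') as [h [Hh Hr]]. apply cls_side in Hh.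
        destruct Hh as [Hh [a [_ [Ha Ea]]]]. exists h. split; auto.
        intros r [<-|Hr']; simpl; auto. subst. unfold q0 in Ha. destruct (snd a x); simpl in *; congruence.
      * destruct (St1 p' Hp') as [h [Hh Hr]]. apply cls_side in Hh.
        destruct Hh as [Hh [a [_ [Ha Ea]]]]. exists h. split; auto.
        intros r [<-|Hr']; simpl; auto. subst. unfold q1 in Ha. auto.
Qed.

Lemma Phi_mono_S n d : Phi n d <= Phi (S n) d.
Proof. destruct n, d; simpl; lia. Qed.

Lemma Phi_mono n k d : Phi n d <= Phi (n + k) d.
Proof.
  induction k. rewrite Nat.add_0_r; lia.
  rewrite <- plus_n_Sm. pose proof (Phi_mono_S (n + k) d). lia.
Qed.

Lemma outer {X : Type} : forall m d (W : list (ent X)), good W -> ldle (cls W) d ->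
  (forall e, In e W -> length (fst e) <= m) -> length W <= Phi (tri m) d.
Proof.
  induction m as [|m IHm]; intros d W HW Hd Hl.
  - simpl. destruct W as [|e0 [|e1 W]]; simpl; try lia.
    exfalso. destruct HW as [Hp _]. inversion Hp; subst.
    inversion H1; subst. destruct H3 as [y [[A _]|[A _]]];
    pose proof (Hl e0 (or_introl eq_refl)); destruct (fst e0); simpl in *; try lia; auto.
  - destruct W as [|e0 W]; [simpl; lia|].
    apply Nat.le_trans with (Phi (tri m + length (map fst (fst e0))) d).
    + apply inner; auto. intros e He. split; [apply Hl; auto|].
      destruct (Nat.le_gt_cases (length (fst e)) m) as [L|L]; [left; auto|right].
      destruct He as [<-|He].
      * destruct (fst e0) as [|p T] eqn:E; simpl in L; [lia|].
        exists p. simpl; auto.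
      * destruct HW as [Hp _]. inversion Hp; subst. rewrite Forall_forall in H1.
        destruct (H1 e He) as [y [[A B]|[A B]]].
        -- exists (y, true). split; auto. apply in_map_iff. exists (y,false); auto.
        -- exists (y, false). split; auto. apply in_map_iff. exists (y,true); auto.
    + simpl. rewrite length_map. pose proof (Hl e0 (or_introl eq_refl)).
      replace (tri m + S m) with ((tri m + length (fst e0)) + (S m - length (fst e0))) by lia.
      apply Phi_mono.
Qed.

Lemma Phi_bound n d : Phi n d <= (n + 1) ^ d.
Proof.
  revert d; induction n; intros d.
  - simpl. rewrite Nat.pow_1_l; lia.
  - destruct d; simpl Phi. simpl; lia.
    pose proof (IHn (S d)). pose proof (IHn d).
    pose proof (Nat.pow_le_mono_l (n+1) (S n + 1) d ltac:(lia)).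
    rewrite !Nat.pow_succ_r'. rewrite Nat.pow_succ_r' in H.
    set (A := (n+1)^d) in *. set (B := (S n + 1)^d) in *.
    assert ((S n + 1) * A <= (S n + 1) * B) by (apply Nat.mul_le_mono_l; auto).
    lia.
Qed.

Lemma tri_le m : tri m <= m * m.
Proof. induction m; simpl; nia. Qed.

Lemma ratio a : forall k, k <= a -> (a+1)^k * (a-k) <= a ^ (S k).
Proof.
  induction k; intros Hk.
  - simpl. lia.
  - pose proof (IHk ltac:(lia)) as IH.
    set (P := (a+1)^k) in *. set (Q := a ^ S k) in *.
    change ((a+1)^(S k)) with ((a+1) * P). change (a ^ S (S k)) with (a * Q).
    assert (HP : (a - k) * a * P <= a * Q) by nia.
    nia.
Qed.

Lemma growth d : exists B, forall m, 2 ^ m <= (m + 1) ^ (2 * d) -> m <= B.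
Proof.
  set (K := S (2 * d)). set (a0 := 2 * K).
  assert (step : forall a, a0 <= a -> (a+1)^K <= 2 * a ^ K).
  { intros a Ha. pose proof (ratio a K ltac:(unfold a0 in Ha; lia)).
    change (a ^ S K) with (a * a ^ K) in H.
    assert ((a+1)^K * a <= 2 * a ^ K * a) by (unfold a0 in Ha; nia).
    apply Nat.mul_le_mono_pos_r in H0; auto. unfold a0, K in Ha; lia. }
  assert (big : forall j, (a0 + j) ^ K <= a0 ^ K * 2 ^ j).
  { induction j. rewrite Nat.add_0_r; simpl; lia.
    pose proof (step (a0 + j) ltac:(lia)). rewrite <- plus_n_Sm.
    replace (S (a0 + j)) with (a0 + j + 1) by lia. simpl (2 ^ S j). nia. }
  exists (a0 + 2 * a0 ^ K). intros m Hm.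
  destruct (Nat.le_gt_cases a0 (m+1)) as [L|L]; [|lia].
  pose proof (big (m + 1 - a0)). replace (a0 + (m + 1 - a0)) with (m+1) in H by lia.
  assert (E : (m+1)^K = (m+1) * (m+1)^(2*d)) by reflexivity.
  assert (E2 : 2 ^ (m+1) = 2 * 2 ^ m) by (rewrite Nat.add_1_r; reflexivity).
  assert (2 ^ (m + 1 - a0) <= 2 ^ (m+1)) by (apply Nat.pow_le_mono_r; lia).
  assert ((m+1) * 2^m <= a0 ^ K * 2 * 2 ^ m) by nia.
  assert (0 < 2 ^ m) by (apply Nat.neq_0_lt_0, Nat.pow_nonzero; lia).
  assert (m + 1 <= a0 ^ K * 2) by (apply (Nat.mul_le_mono_pos_r _ _ (2^m)); auto).
  lia.
Qed.

Definition mentions {X : Type} (x : X) (T : list (X * bool)) : bool :=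
  existsb (fun p => eqd (fst p) x) T.

Lemma mentions_true {X : Type} (x : X) T : mentions x T = true -> exists p, In p T /\ fst p = x.
Proof.
  unfold mentions. intros H. apply existsb_exists in H. destruct H as [p [H1 H2]]. apply (proj1 (eqd_spec _ _)) in H2. exists p; split; auto.
Qed.

Lemma mentions_In {X : Type} (x : X) T b : In (x, b) T -> mentions x T = true.
Proof.
  intros H. unfold mentions. apply existsb_exists. exists (x,b). split; auto. apply eqd_spec; auto.
Qed.

Lemma rm_nomention {X : Type} (x : X) T : mentions x T = false -> rm x T = T.
Proof.
  induction T as [|p T IH]; simpl; auto. unfold mentions; simpl.
  intros H. apply Bool.orb_false_iff in H. destruct H as [H1 H2].
  rewrite H1. simpl. f_equal. apply IH; auto.
Qed.

Lemma conf_rm2 {X : Type} x (T T' : list (X*bool)) h h' :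
  adjacent X T T' -> real h T -> real h' T' ->
  (mentions x T = true -> mentions x T' = true -> h x = h' x) ->
  adjacent X (rm x T) (rm x T').
Proof.
  intros [y Hy] Hr Hr' E. exists y.
  destruct (excluded_middle_informative (y = x)) as [->|Hne].
  - exfalso. destruct Hy as [[A B]|[A B]];
    pose proof (mentions_In _ _ _ A); pose proof (mentions_In _ _ _ B);
    apply Hr in A; apply Hr' in B; simpl in *; specialize (E H H0); congruence.
  - destruct Hy as [[A B]|[A B]]; [left|right]; split; apply rm_In; auto.
Qed.

Lemma good_side2 {X : Type} (x : X) (q : ent X -> bool) (W : list (ent X)) :
  good W ->
  (forall a b, In a W -> In b W -> q a = true -> q b = true ->
     mentions x (fst a) = true -> mentions x (fst b) = true -> snd a x = snd b x) ->
  good (map (fx x) (filter q W)).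
Proof.
  intros [Hp Hr] Hq. split.
  - apply FOP_map with (R := conf). apply FOP_filter; auto.
    intros a b Ha Hb Hab. apply filter_In in Ha, Hb. unfold conf, fx; simpl.
    apply conf_rm2 with (snd a) (snd b); [exact Hab | apply Hr; tauto | apply Hr; tauto |].
    intros; apply Hq; tauto.
  - intros e He. apply in_map_iff in He. destruct He as [z [<- Hz]].
    apply filter_In in Hz. intros p Hp'. unfold fx in Hp'; simpl in Hp'.
    apply rm_In in Hp'. unfold fx; simpl. apply (Hr z); tauto.
Qed.

Lemma sum_le {A : Type} (f g : A -> nat) l :
  (forall e, In e l -> f e <= g e) -> list_sum (map f l) <= list_sum (map g l).
Proof.
  induction l; simpl; intros H; auto. pose proof (H a (or_introl eq_refl)).
  pose proof (IHl (fun e He => H e (or_intror He))). lia.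
Qed.

Lemma sum_lt {A : Type} (f g : A -> nat) l e0 :
  In e0 l -> f e0 < g e0 ->
  (forall e, In e l -> f e <= g e) -> list_sum (map f l) < list_sum (map g l).
Proof.
  induction l; simpl; intros Hin Hlt H; [destruct Hin|].
  destruct Hin as [<-|Hin].
  - pose proof (sum_le f g l (fun e He => H e (or_intror He))). lia.
  - pose proof (H a (or_introl eq_refl)).
    pose proof (IHl Hin Hlt (fun e He => H e (or_intror He))). lia.
Qed.

Lemma sum_scale {A : Type} (c : nat) (f : A -> nat) l :
  list_sum (map (fun e => c * f e) l) = c * list_sum (map f l).
Proof. induction l; simpl; auto. rewrite IHl. lia. Qed.

Lemma sum_add {A : Type} (f g : A -> nat) l :
  list_sum (map (fun e => f e + g e) l) = list_sum (map f l) + list_sum (map g l).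
Proof. induction l; simpl; lia. Qed.

Lemma sum_filter {A : Type} (f : A -> nat) (q : A -> bool) (t : A -> A) l :
  list_sum (map f (map t (filter q l))) = list_sum (map (fun e => if q e then f (t e) else 0) l).
Proof. induction l; simpl; auto. destruct (q a); simpl; lia. Qed.

Definition tot {X : Type} (W : list (ent X)) := list_sum (map (fun e => length (fst e)) W).
Definition wsum {X : Type} (L : nat) (W : list (ent X)) :=
  list_sum (map (fun e => 2 ^ (L - length (fst e))) W).

Lemma measure {X : Type} L : forall n (W : list (ent X)), tot W <= n -> good W ->
  (forall e, In e W -> length (fst e) <= L) -> wsum L W <= 2 ^ L.
Proof.
  induction n as [n IH] using lt_wf_ind. intros W Ht HW HL.
  destruct (classic (exists e0 p0, In e0 W /\ In p0 (fst e0))) as [[e0 [p0 [He0 Hp0]]]|Hne].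
  2:{ assert (Hemp : forall e, In e W -> fst e = []).
      { intros e He. destruct (fst e) as [|p T] eqn:E; auto. exfalso; apply Hne.
        exists e, p. rewrite E; simpl; auto. }
      unfold wsum. destruct W as [|e1 [|e2 W]]; simpl; try lia.
      - rewrite (Hemp e1 (or_introl eq_refl)). simpl. rewrite Nat.sub_0_r. lia.
      - exfalso. destruct HW as [Hp _]. inversion Hp; subst. inversion H1; subst.
        destruct H3 as [y [[A _]|[A _]]]; rewrite (Hemp e1 (or_introl eq_refl)) in A; destruct A. }
  set (x := fst p0).
  set (q0 := fun e : ent X => orb (negb (mentions x (fst e))) (negb (snd e x))).
  set (q1 := fun e : ent X => orb (negb (mentions x (fst e))) (snd e x)).
  assert (Hm0 : mentions x (fst e0) = true) by (destruct p0; apply (mentions_In _ _ b); auto).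
  assert (side : forall q, (forall a b, In a W -> In b W -> q a = true -> q b = true ->
     mentions x (fst a) = true -> mentions x (fst b) = true -> snd a x = snd b x) ->
     wsum L (map (fx x) (filter q W)) <= 2 ^ L).
  { intros q Hq. apply (IH (tot (map (fx x) (filter q W)))).
    - apply Nat.lt_le_trans with (tot W); auto. unfold tot. rewrite sum_filter.
      apply sum_lt with e0; auto.
      + destruct (q e0); [|simpl; destruct (fst e0); simpl in *; [destruct Hp0|lia]].
        unfold fx; simpl. apply rm_len_lt with p0; auto.
      + intros e _. destruct (q e); [apply rm_len_le|lia].
    - lia.
    - apply good_side2; auto.
    - intros e He. apply in_map_iff in He. destruct He as [z [<- Hz]].
      apply filter_In in Hz. unfold fx; simpl. pose proof (rm_len_le x (fst z)).
      pose proof (HL z (proj1 Hz)). lia. }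
  assert (S0 : wsum L (map (fx x) (filter q0 W)) <= 2 ^ L).
  { apply side. intros a b _ _ Ha Hb Ma Mb. unfold q0 in *. rewrite Ma, Mb in *.
    simpl in *. destruct (snd a x), (snd b x); simpl in *; congruence. }
  assert (S1 : wsum L (map (fx x) (filter q1 W)) <= 2 ^ L).
  { apply side. intros a b _ _ Ha Hb Ma Mb. unfold q1 in *. rewrite Ma, Mb in *.
    simpl in *. congruence. }
  unfold wsum in *. rewrite sum_filter in S0, S1.
  assert (2 * list_sum (map (fun e => 2 ^ (L - length (fst e))) W) <=
          list_sum (map (fun e => (if q0 e then 2 ^ (L - length (fst (fx x e))) else 0) +
                                  (if q1 e then 2 ^ (L - length (fst (fx x e))) else 0)) W)).
  { replace (2 * list_sum (map (fun e => 2 ^ (L - length (fst e))) W)) with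
      (list_sum (map (fun e => 2 * 2 ^ (L - length (fst e))) W)).
    2:{ apply sum_scale. }
    apply sum_le. intros e He. pose proof (HL e He).
    unfold q0, q1, fx; simpl.
    destruct (mentions x (fst e)) eqn:M; simpl.
    - apply mentions_true in M. destruct M as [p [Hp Ep]].
      pose proof (rm_len_lt x p (fst e) Hp Ep).
      assert (2 * 2 ^ (L - length (fst e)) <= 2 ^ (L - length (rm x (fst e)))).
      { rewrite <- Nat.pow_succ_r'. apply Nat.pow_le_mono_r; lia. }
      destruct (snd e x); simpl; lia.
    - rewrite rm_nomention; auto. lia. }
  rewrite sum_add in H. unfold ent in *. lia.
Qed.

Lemma choose_real {X : Type} (H : (X -> bool) -> Prop) (C : list (list (X * bool))) :
  (forall S, In S C -> realizable X H S) ->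
  exists W : list (ent X), map fst W = C /\ forall e, In e W -> H (snd e) /\ real (snd e) (fst e).
Proof.
  induction C as [|S C IH]; intros HC.
  - exists []; simpl; split; auto. tauto.
  - destruct IH as [W [E HW]]. intros; apply HC; simpl; auto.
    destruct (HC S (or_introl eq_refl)) as [h [Hh Hr]].
    exists ((S, h) :: W). simpl. rewrite E. split; auto.
    intros e [<-|He]; auto.
Qed.

Lemma fop_from {X : Type} (W : list (ent X)) :
  NoDup (map fst W) ->
  (forall a b, In a W -> In b W -> fst a <> fst b -> adjacent X (fst a) (fst b)) ->
  ForallOrdPairs conf W.
Proof.
  induction W as [|a W IH]; intros ND Hadj; constructor.
  - apply Forall_forall. intros b Hb. unfold conf. apply Hadj; simpl; auto.
    intro E. simpl in ND. inversion ND; subst. apply H1. rewrite E. apply in_map; auto.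
  - apply IH. simpl in ND; inversion ND; auto. intros; apply Hadj; simpl; auto.
Qed.

Lemma clique_W {X : Type} (H : (X -> bool) -> Prop) m C : clique X H m C ->
  exists W : list (ent X), length W = length C /\ good W /\ (forall h, cls W h -> H h) /\
    (forall e, In e W -> length (fst e) = m).
Proof.
  intros [ND [HS Hadj]].
  destruct (choose_real H C) as [W [E HW]]. intros S HS'; apply HS; auto.
  exists W. subst C. rewrite length_map. split; auto. split; [split|split].
  - apply fop_from; auto. intros a b Ha Hb Hne. apply Hadj; auto; apply in_map; auto.
  - intros e He; apply HW; auto.
  - intros h [T HT]. apply (HW _ HT).
  - intros e He. apply HS. apply in_map; auto.
Qed.

Lemma wsum_eq {X : Type} d (W : list (ent X)) : (forall e, In e W -> length (fst e) = d) ->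
  wsum d W = length W.
Proof.
  unfold wsum. induction W; simpl; auto. intros Hl. rewrite IHW; auto.
  rewrite Hl; auto. rewrite Nat.sub_diag. simpl. lia.
Qed.

Lemma adj_cons {X : Type} (p : X * bool) T T' : adjacent X T T' -> adjacent X (p :: T) (p :: T').
Proof. intros [y [[A B]|[A B]]]; exists y; [left|right]; simpl; auto. Qed.

Lemma paths_props {X : Type} : forall d (t : mtree X), complete X d t ->
  length (paths X t) = 2 ^ d /\ NoDup (paths X t) /\ (forall p, In p (paths X t) -> length p = d) /\
  (forall p q, In p (paths X t) -> In q (paths X t) -> p <> q -> adjacent X p q).
Proof.
  induction d as [|d IH]; intros t Hc.
  - destruct t; simpl in Hc; try tauto. simpl. split; auto. split.
    constructor; auto. constructor. split.
    intros p [<-|[]]; auto. intros p q [<-|[]] [<-|[]]; tauto.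
  - destruct t as [|x t0 t1]; simpl in Hc; try tauto. destruct Hc as [C0 C1].
    destruct (IH t0 C0) as [L0 [N0 [S0 A0]]]. destruct (IH t1 C1) as [L1 [N1 [S1 A1]]].
    simpl. rewrite length_app, !length_map, L0, L1. split; [simpl; lia|]. split; [|split].
    + apply NoDup_app.
      * apply NoDup_map_NoDup_ForallPairs; auto. intros a b _ _ E; inversion E; auto.
      * apply NoDup_map_NoDup_ForallPairs; auto. intros a b _ _ E; inversion E; auto.
      * intros a Ha Hb. apply in_map_iff in Ha, Hb. destruct Ha as [a0 [<- _]].
        destruct Hb as [b0 [E _]]. discriminate.
    + intros p Hp. apply in_app_or in Hp. destruct Hp as [Hp|Hp]; apply in_map_iff in Hp;
      destruct Hp as [p' [<- Hp']]; simpl; f_equal; auto.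
    + intros p q Hp Hq Hne. apply in_app_or in Hp, Hq.
      destruct Hp as [Hp|Hp]; apply in_map_iff in Hp; destruct Hp as [p' [<- Hp']];
      destruct Hq as [Hq|Hq]; apply in_map_iff in Hq; destruct Hq as [q' [<- Hq']].
      * apply adj_cons, A0; auto. congruence.
      * exists x. left; simpl; auto.
      * exists x. right; simpl; auto.
      * apply adj_cons, A1; auto. congruence.
Qed.

Theorem mainTheorem12 (X : Type) (H : (X -> bool) -> Prop) :
  CD_finite X H <-> LD_finite X H.
Proof.
  split.
  - intros [B HB]. exists B. intros d t Hc Hs. apply HB. split.
    + destruct (paths_props d t Hc) as [L [N [S A]]].
      exists (paths X t). repeat split; auto; intros; apply S; auto.
    + intros C HC. destruct (clique_W H d C HC) as [W [E [G [Hcls Hl]]]].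
      rewrite <- E, <- (wsum_eq d W Hl).
      apply (measure d (tot W) W); auto. intros e He; rewrite Hl; auto.
  - intros [B0 HB0].
    destruct (growth B0) as [B HB]. exists B. intros m [[C [HC E]] _].
    apply HB. destruct (clique_W H m C HC) as [W [E' [G [Hcls Hl]]]].
    assert (Hld : ldle (cls W) B0).
    { intros t Hc Hs. assert (S B0 <= B0); [|lia]. apply (HB0 _ t Hc).
      intros p Hp. destruct (Hs p Hp) as [h [Hh Hr]]. exists h; auto. }
    pose proof (outer m B0 W G Hld ltac:(intros e He; rewrite Hl; auto)) as Ho.
    pose proof (Phi_bound (tri m) B0). pose proof (tri_le m).
    assert ((tri m + 1) ^ B0 <= (m + 1) ^ (2 * B0)).
    { rewrite Nat.pow_mul_r, Nat.pow_2_r. apply Nat.pow_le_mono_l. nia. }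
    lia.
Qed.
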